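(* Let $F_1,\ldots,F_m$ be subsets of $[n]$ with $|F_i|=d$ for all $i$, and let $\Delta$ be the simplicial complex they generate. Let $m_i=\prod_{j\in F_i}X_j$ and $$f(X_1,\ldots,X_n,Y_1,\ldots,Y_m)=\sum_{i=1}^m Y_i\, m_i(X_1,\ldots,X_n)\in\mathbb{Q}[X_1,\ldots,X_n,Y_1,\ldots,Y_m].$$ Then a basis of the linear space $\partial^+ f$ consists of the following $2|\Delta|$ polynomials: (i) the $|\Delta|$ monomials $\prod_{j\in F}X_j$ for $F$ a face of $\Delta$; (ii) the $|\Delta|$ polynomials $\partial f/\partial F$ for $F$ a face of $\Delta$, where $\partial f/\partial F$ is obtained from $f$ by differentiating once with respect to each variable $X_j$ with $j\in F$. In particular $\dim\partial^+ f=2|\Delta|$.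
   Context: The simplicial complex generated by $F_1,\ldots,F_m\subseteq[n]$ is the family $\Delta$ of all nonempty $Y\subseteq[n]$ with $Y\subseteq F_i$ for some $i$; its elements are called faces and $|\Delta|$ is their number. For a polynomial $f$, $\partial^+ f$ denotes the linear space spanned by the partial derivatives of $f$ of order $r$ for all $r$ with $1\le r\le\deg(f)-1$. *)

(* Defs.v *)
From HB Require Import structures.
From mathcomp Require Import all_boot all_algebra.
From mathcomp Require Import mpoly.
Set Implicit Arguments. Unset Strict Implicit. Unset Printing Implicit Defensive.
Import GRing.Theory.
Local Open Scope ring_scope.

(* Polynomial ring Q[X_1..X_n, Y_1..Y_m] is {mpoly rat[n + m]};
   X_j = 'X_(lshift m j) (j : 'I_n), Y_i = 'X_(rshift n i) (i : 'I_m). *)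

(* Total degree of a multivariate polynomial (msize = degree + 1, 0 for p = 0). *)
Definition tdeg (k : nat) (p : {mpoly rat[k]}) : nat := (msize p).-1.

Definition in_span (k : nat) (S : {mpoly rat[k]} -> Prop) (p : {mpoly rat[k]}) : Prop :=
  exists (l : nat) (g : 'I_l -> {mpoly rat[k]}) (c : 'I_l -> rat),
    (forall i, S (g i)) /\ p = \sum_(i < l) c i *: g i.

Definition dplus (k : nat) (f : {mpoly rat[k]}) : {mpoly rat[k]} -> Prop :=
  in_span (fun q => exists mm : 'X_{1..k},
     (1 <= mdeg mm)%N /\ (mdeg mm <= tdeg f - 1)%N /\ q = mderivm mm f).

Definition is_basis (k : nat) (V : {mpoly rat[k]} -> Prop) (I : finType)
    (b : I -> {mpoly rat[k]}) : Prop :=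
  [/\ (forall i, V (b i)),
      (forall c : I -> rat, \sum_i c i *: b i = 0 -> forall i, c i = 0) &
      (forall p, V p -> exists c : I -> rat, p = \sum_i c i *: b i)].

Definition has_dim (k : nat) (V : {mpoly rat[k]} -> Prop) (l : nat) : Prop :=
  exists b : 'I_l -> {mpoly rat[k]}, is_basis V b.

Definition is_face (n m : nat) (Fs : 'I_m -> {set 'I_n}) (Y : {set 'I_n}) : bool :=
  (Y != set0) && [exists i, Y \subset Fs i].

Definition face_t (n m : nat) (Fs : 'I_m -> {set 'I_n}) : finType :=
  {Y : {set 'I_n} | is_face Fs Y}.

Definition fpoly (n m : nat) (Fs : 'I_m -> {set 'I_n}) : {mpoly rat[n + m]} :=
  \sum_(i < m) 'X_(rshift n i) * \prod_(j in Fs i) 'X_(lshift m j).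

Definition xmon (n m : nat) (F : {set 'I_n}) : {mpoly rat[n + m]} :=
  \prod_(j in F) 'X_(lshift m j).

Definition dF (n m : nat) (F : {set 'I_n}) (f : {mpoly rat[n + m]}) : {mpoly rat[n + m]} :=
  foldr (fun j p => mderiv (lshift m j) p) f (enum F).

Definition lemma6_family (n m : nat) (Fs : 'I_m -> {set 'I_n})
    (x : (face_t Fs + face_t Fs)%type) : {mpoly rat[n + m]} :=
  match x with
  | inl F => xmon m (val F)
  | inr F => dF (val F) (fpoly Fs)
  end.
Arguments lemma6_family {n m} Fs x.

(* Main.v *)
Require Import Defs.
From HB Require Import structures.
From mathcomp Require Import all_boot all_algebra.
From mathcomp Require Import mpoly.
From mathcomp Require Import zify.
Set Implicit Arguments. Unset Strict Implicit. Unset Printing Implicit Defensive.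
Import GRing.Theory.
Local Open Scope ring_scope.


Definition ind (k : nat) (S : {set 'I_k}) : 'X_{1..k} := (\sum_(x <- enum S) U_(x))%MM.

Lemma sumU_E k (s : seq 'I_k) x : uniq s ->
  (\sum_(y <- s) U_(y))%MM x = (x \in s).
Proof.
rewrite mnm_sumE; elim: s => [|y s ih] /=; first by rewrite big_nil.
move=> /andP[ys us]; rewrite big_cons ih // mnm1E in_cons.
rewrite (eq_sym x y); case: eqP => [yx|] //=.
by subst y; rewrite (negbTE ys).
Qed.

Lemma indE k (S : {set 'I_k}) x : ind S x = (x \in S).
Proof. by rewrite /ind sumU_E ?enum_uniq // mem_enum. Qed.

Lemma ind_inj k : injective (@ind k).
Proof.
move=> S T h; apply/setP => x; move/mnmP: h => /(_ x); rewrite !indE.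
by move=> /eqP; rewrite eqn_leq => /andP[]; do 2 case: (_ \in _).
Qed.

Lemma mdeg_ind k (S : {set 'I_k}) : mdeg (ind S) = #|S|.
Proof.
rewrite mdegE -sum1_card [RHS]big_mkcond /=; apply: eq_bigr => i _.
by rewrite indE; case: (_ \in _).
Qed.

Lemma lem_indP k (S T : {set 'I_k}) : (ind S <= ind T)%MM = (S \subset T).
Proof.
apply/mnm_lepP/subsetP => [h x xS | h x].
  by move: (h x); rewrite !indE xS; case: (x \in T).
rewrite !indE; case xS: (x \in S) => //; by rewrite (h x xS).
Qed.

Lemma lem_ind k (mm : 'X_{1..k}) S : (mm <= ind S)%MM ->
  mm = ind [set x | mm x != 0%N] /\ [set x | mm x != 0%N] \subset S.
Proof.
move/mnm_lepP => h; split.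
  apply/mnmP => x; rewrite indE inE; move: (h x); rewrite indE.
  by case: (x \in S); case: (mm x) => [|[]].
apply/subsetP => x; rewrite inE; move: (h x); rewrite indE.
by case: (x \in S); case: (mm x).
Qed.

Lemma ind_sub k (S T : {set 'I_k}) : S \subset T -> (ind T - ind S = ind (T :\: S))%MM.
Proof.
move/subsetP => h; apply/mnmP => x; rewrite mnmBE !indE inE.
case xS: (x \in S); first by rewrite (h x xS).
by case: (x \in T).
Qed.

Lemma mderivm_ind k (mm : 'X_{1..k}) S :
  mderivm mm ('X_[ind S] : {mpoly rat[k]}) =
  if (mm <= ind S)%MM then 'X_[(ind S - mm)%MM] else 0.
Proof.
rewrite mderivmX; case: ifP => [/mnm_lepP h | /negbT].
  rewrite big1 ?scale1r // => i _; move: (h i); rewrite indE.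
  by case: (i \in S); case: (mm i) => [|[]].
rewrite /lem negb_forall => /existsP [i]; rewrite -ltnNge => lt.
by rewrite (bigD1 i) //= ffact_small // mul0n scale0r.
Qed.

Lemma mderivm_sumU k (s : seq 'I_k) (p : {mpoly rat[k]}) :
  mderivm (\sum_(x <- s) U_(x))%MM p = foldr (@mderiv k _) p s.
Proof.
elim: s => [|y s ih] /=; first by rewrite big_nil mderivm0m.
by rewrite big_cons addmC mderivmDm ih mderivmU1m.
Qed.

Definition Lm n m (G : {set 'I_n}) : {set 'I_(n + m)} := [set lshift m j | j in G].
Definition Tset n m (Fs : 'I_m -> {set 'I_n}) (i : 'I_m) : {set 'I_(n + m)} :=
  rshift n i |: Lm m (Fs i).

Lemma in_Lm_l n m (G : {set 'I_n}) j : (lshift m j \in Lm m G) = (j \in G).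
Proof. by rewrite /Lm mem_imset //; apply: lshift_inj. Qed.

Lemma in_Lm_r n m (G : {set 'I_n}) i : (rshift n i \in Lm m G) = false.
Proof.
apply/negbTE/imsetP => -[j _ /eqP]; by rewrite eq_rlshift.
Qed.

Lemma in_T_r n m (Fs : 'I_m -> {set 'I_n}) i i' :
  (rshift n i' \in Tset Fs i) = (i' == i).
Proof. by rewrite /Tset in_setU1 in_Lm_r orbF (inj_eq (@rshift_inj _ _)). Qed.

Lemma in_T_l n m (Fs : 'I_m -> {set 'I_n}) i j :
  (lshift m j \in Tset Fs i) = (j \in Fs i).
Proof. by rewrite /Tset in_setU1 in_Lm_l eq_lrshift. Qed.

Lemma card_Lm n m (G : {set 'I_n}) : #|Lm m G| = #|G|.
Proof. by rewrite /Lm card_imset //; apply: lshift_inj. Qed.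

Lemma card_T n m (Fs : 'I_m -> {set 'I_n}) i : #|Tset Fs i| = #|Fs i|.+1.
Proof. by rewrite /Tset cardsU1 in_Lm_r card_Lm. Qed.

Lemma Lm_inj n m : injective (@Lm n m).
Proof.
move=> A B h; apply/setP => j; by rewrite -(in_Lm_l m A) -(in_Lm_l m B) h.
Qed.

Lemma memLm n m (A : {set 'I_n}) x :
  (x \in map (lshift m) (enum A)) = (x \in Lm m A).
Proof.
apply/mapP/imsetP => -[j]; rewrite ?mem_enum => jA ->; exists j => //.
by rewrite mem_enum.
Qed.

Lemma sumLm n m (A : {set 'I_n}) :
  (\sum_(j in A) U_(lshift m j))%MM = ind (Lm m A).
Proof.
apply/mnmP => x; rewrite indE -big_enum /= -(big_map (lshift m) xpredT (fun y => U_(y)%MM)).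
rewrite sumU_E ?memLm //; rewrite map_inj_uniq ?enum_uniq //; apply: lshift_inj.
Qed.

Lemma xmonE n m (A : {set 'I_n}) : xmon m A = 'X_[ind (Lm m A)].
Proof.
rewrite /xmon -sumLm.
by rewrite (big_morph (@mpolyX _ rat) (@mpolyXD _ _) (@mpolyX0 _ _)).
Qed.

Lemma dFE n m (G : {set 'I_n}) (p : {mpoly rat[n + m]}) :
  dF G p = mderivm (ind (Lm m G)) p.
Proof.
rewrite /ind mderivm_sumU /dF -(foldr_map (lshift m) (@mderiv _ _)).
apply: mderiv_perm; apply: uniq_perm.
- by rewrite (map_inj_uniq (@lshift_inj _ _)) enum_uniq.
- exact: enum_uniq.
by move=> x; rewrite memLm mem_enum.
Qed.

Lemma fpolyE n m (Fs : 'I_m -> {set 'I_n}) :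
  fpoly Fs = \sum_i 'X_[ind (Tset Fs i)].
Proof.
apply: eq_bigr => i _; rewrite -/(xmon m (Fs i)) xmonE -mpolyXD; congr 'X_[_].
apply/mnmP => x; rewrite mnmDE mnm1E !indE /Tset in_setU1.
rewrite [rshift n i == x]eq_sym; case: eqP => [->|] /=; first by rewrite in_Lm_r.
by case: (_ \in _).
Qed.

Lemma mderiv_f n m (Fs : 'I_m -> {set 'I_n}) mm :
  mderivm mm (fpoly Fs) = \sum_i (if (mm <= ind (Tset Fs i))%MM
       then 'X_[(ind (Tset Fs i) - mm)%MM] else 0).
Proof.
rewrite fpolyE raddf_sum; apply: eq_bigr => i _; exact: mderivm_ind.
Qed.

Lemma coef_f n m (Fs : 'I_m -> {set 'I_n}) i0 :
  (fpoly Fs)@_(ind (Tset Fs i0)) = 1.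
Proof.
rewrite fpolyE raddf_sum (bigD1 i0) //= mcoeffX eqxx big1 ?addr0 // => i ne.
rewrite mcoeffX; case: eqP => // /ind_inj h.
by move: (in_T_r Fs i0 i0); rewrite -h in_T_r eqxx eq_sym (negbTE ne).
Qed.

Lemma tdeg_le n m d (Fs : 'I_m -> {set 'I_n}) (hd : forall i, #|Fs i| = d) :
  (tdeg (fpoly Fs) <= d.+1)%N.
Proof.
rewrite /tdeg fpolyE; have: (msize (\sum_i ('X_[ind (Tset Fs i)] : {mpoly rat[n+m]})) <= d.+2)%N.
  apply: leq_trans (msize_sum _ _ _) _; apply/bigmax_leqP => i _.
  by rewrite msizeX mdeg_ind card_T hd.
by case: (msize _) => // k.
Qed.

Lemma tdeg_ge n m d (Fs : 'I_m -> {set 'I_n}) (hd : forall i, #|Fs i| = d) (i0 : 'I_m) :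
  (d.+1 <= tdeg (fpoly Fs))%N.
Proof.
have := @msize_mdeg_lt _ _ (fpoly Fs) (ind (Tset Fs i0)).
rewrite mcoeff_msupp coef_f oner_neq0 mdeg_ind card_T hd /tdeg => /(_ isT).
by case: (msize _).
Qed.



Lemma basis_transfer k (V : {mpoly rat[k]} -> Prop) (I J : finType)
  (b : I -> {mpoly rat[k]}) (h : J -> I) :
  bijective h -> is_basis V b -> is_basis V (fun j => b (h j)).
Proof.
move=> hb [Vb ind sp]; have [h' hK h'K] := hb.
have re : forall c : I -> rat, \sum_i c i *: b i = \sum_j c (h j) *: b (h j).
  by move=> c; rewrite (reindex h) //; apply: onW_bij.
split => //.
- move=> c' hc j; have := ind (fun i => c' (h' i)); rewrite re.
  under eq_bigr do rewrite hK.
  by move=> /(_ hc (h j)); rewrite hK.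
- move=> p /sp [c ->]; exists (fun j => c (h j)); exact: re.
Qed.

Lemma dim_of_basis k (V : {mpoly rat[k]} -> Prop) (I : finType)
  (b : I -> {mpoly rat[k]}) l : #|I| = l -> is_basis V b -> has_dim V l.
Proof.
move=> e hb; exists (fun j => b (enum_val (cast_ord (esym e) j))).
apply: (basis_transfer (h := fun j => enum_val (cast_ord (esym e) j))) => //.
apply: bij_comp; first exact: enum_val_bij.
by exists (cast_ord e) => x; rewrite ?cast_ordK ?cast_ordKV.
Qed.



Lemma sub_Lm n m (B : {set 'I_n}) (S : {set 'I_(n + m)}) :
  S \subset Lm m B ->
  S = Lm m [set j | lshift m j \in S] /\ [set j | lshift m j \in S] \subset B.
Proof.
move/subsetP => h; split.
  apply/setP => x; apply/idP/idP => [xS|].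
    have /imsetP [j _ ej] := h x xS; rewrite ej in xS *.
    by rewrite in_Lm_l inE.
  by move=> /imsetP [j]; rewrite inE => jS ->.
apply/subsetP => j; rewrite inE => /h; by rewrite in_Lm_l.
Qed.

Lemma subT_Lm n m (Fs : 'I_m -> {set 'I_n}) i (S : {set 'I_(n + m)}) :
  S \subset Tset Fs i -> rshift n i \notin S -> S \subset Lm m (Fs i).
Proof.
move=> /subsetP h hn; apply/subsetP => x xS; move: (h x xS).
rewrite /Tset in_setU1; case/orP => // /eqP ex.
by rewrite -ex xS in hn.
Qed.

Lemma dF_sum n m (Fs : 'I_m -> {set 'I_n}) (G : {set 'I_n}) :
  dF G (fpoly Fs) = \sum_i (if Lm m G \subset Tset Fs i
     then 'X_[ind (Tset Fs i :\: Lm m G)] else 0).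
Proof.
rewrite dFE mderiv_f; apply: eq_bigr => i _; rewrite lem_indP.
by case: ifP => // hs; rewrite ind_sub.
Qed.

Lemma face_card n m d (Fs : 'I_m -> {set 'I_n}) (hd : forall i, #|Fs i| = d)
  (F : {set 'I_n}) : is_face Fs F -> (0 < #|F| <= d)%N.
Proof.
case/andP => ne /existsP [i sF]; rewrite card_gt0 ne -(hd i) /=.
exact: subset_leq_card.
Qed.



Lemma Lm_sub_T n m (Fs : 'I_m -> {set 'I_n}) i (F : {set 'I_n}) :
  F \subset Fs i -> Lm m F \subset Tset Fs i.
Proof.
move/subsetP => h; apply/subsetP => x /imsetP [j jF ->].
by rewrite in_T_l h.
Qed.

Lemma setDDK T (A B : {set T}) : A \subset B -> B :\: (B :\: A) = A.
Proof. by move=> h; rewrite setDDr setDv set0U; apply/setIidPr. Qed.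

Lemma setD_inj T (A B C : {set T}) : A \subset C -> B \subset C ->
  C :\: A = C :\: B -> A = B.
Proof. by move=> hA hB e; rewrite -(setDDK hA) -(setDDK hB) e. Qed.

Definition spanb n m (Fs : 'I_m -> {set 'I_n}) (p : {mpoly rat[n + m]}) :=
  exists c : (face_t Fs + face_t Fs) -> rat,
    p = \sum_x c x *: lemma6_family Fs x.

Lemma spanb_single n m (Fs : 'I_m -> {set 'I_n}) x0 :
  spanb Fs (lemma6_family Fs x0).
Proof.
exists (fun x => (x == x0)%:R); rewrite (bigD1 x0) //= eqxx scale1r big1 ?addr0 //.
by move=> x /negbTE ->; rewrite scale0r.
Qed.

Lemma spanb0 n m (Fs : 'I_m -> {set 'I_n}) : spanb Fs 0.
Proof. by exists (fun _ => 0); rewrite big1 // => x _; rewrite scale0r. Qed.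

Lemma spanbD n m (Fs : 'I_m -> {set 'I_n}) p q :
  spanb Fs p -> spanb Fs q -> spanb Fs (p + q).
Proof.
move=> [c ->] [c' ->]; exists (fun x => c x + c' x).
by rewrite -big_split; apply: eq_bigr => x _; rewrite scalerDl.
Qed.

Lemma spanbZ n m (Fs : 'I_m -> {set 'I_n}) a p :
  spanb Fs p -> spanb Fs (a *: p).
Proof.
move=> [c ->]; exists (fun x => a * c x).
by rewrite scaler_sumr; apply: eq_bigr => x _; rewrite scalerA.
Qed.

Lemma deriv_span n m d (Fs : 'I_m -> {set 'I_n}) (hd : forall i, #|Fs i| = d)
  (mm : 'X_{1..n + m}) :
  (1 <= mdeg mm)%N -> (mdeg mm <= tdeg (fpoly Fs) - 1)%N ->
  spanb Fs (mderivm mm (fpoly Fs)).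
Proof.
move=> h1 h2; have tb := tdeg_le hd.
case: (boolP [exists i, (mm <= ind (Tset Fs i))%MM]) => [/existsP [i0 hi0] | hn]; last first.
  rewrite mderiv_f big1 => [|i _]; first exact: spanb0.
  by rewrite ifN //; apply: contra hn => h; apply/existsP; exists i.
have [emm sS] := lem_ind hi0.
move: emm sS; set S := [set x | mm x != 0%N] => emm sS.
have dS : mdeg mm = #|S| by rewrite {1}emm mdeg_ind.
case: (boolP (rshift n i0 \in S)) => hr.
- rewrite mderiv_f (bigD1 i0) //= hi0 big1 ?addr0; last first.
    move=> i ne; rewrite emm lem_indP; case: ifP => // /subsetP /(_ _ hr).
    by rewrite in_T_r eq_sym (negbTE ne).
  rewrite emm ind_sub //.
  set D := Tset Fs i0 :\: S.
  have sD : D \subset Lm m (Fs i0).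
    by apply: subT_Lm; [exact: subsetDl | rewrite inE hr].
  have [eD sA] := sub_Lm sD.
  move: eD sA; set A := [set j | lshift m j \in D] => eD sA.
  have fA : is_face Fs A.
    apply/andP; split; last by apply/existsP; exists i0.
    rewrite -card_gt0 -(card_Lm m) -eD /D cardsDS // card_T hd -dS.
    lia.
  have -> : 'X_[ind D] = lemma6_family Fs (inl (exist _ A fA)) by rewrite /= xmonE -eD.
  exact: spanb_single.
- have sL := subT_Lm sS hr.
  have [eS sG] := sub_Lm sL.
  move: eS sG; set G := [set j | lshift m j \in S] => eS sG.
  have fG : is_face Fs G.
    apply/andP; split; last by apply/existsP; exists i0.
    rewrite -card_gt0 -(card_Lm m) -eS -dS //.
  have -> : mderivm mm (fpoly Fs) = lemma6_family Fs (inr (exist _ G fG)).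
    by rewrite /= dFE -eS -emm.
  exact: spanb_single.
Qed.



Lemma coef_fam_l n m (Fs : 'I_m -> {set 'I_n}) (F0 : face_t Fs) x :
  (lemma6_family Fs x)@_(ind (Lm m (val F0))) = (x == inl F0)%:R.
Proof.
case: x => [F|G] /=.
  rewrite xmonE mcoeffX (inj_eq (@ind_inj _)) (inj_eq (@Lm_inj _ _)).
  by rewrite (inj_eq val_inj).
rewrite dF_sum raddf_sum /= big1 // => i _; case: ifP => _; last by rewrite mcoeff0.
rewrite mcoeffX; case: eqP => // /ind_inj /setP /(_ (rshift n i)).
by rewrite in_setD in_T_r !in_Lm_r eqxx.
Qed.

Lemma coef_fam_r n m (Fs : 'I_m -> {set 'I_n}) (G0 : face_t Fs) i0
  (h0 : val G0 \subset Fs i0) x :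
  (lemma6_family Fs x)@_(ind (Tset Fs i0 :\: Lm m (val G0))) = (x == inr G0)%:R.
Proof.
case: x => [F|G] /=.
  rewrite xmonE mcoeffX; case: eqP => // /ind_inj /setP /(_ (rshift n i0)).
  by rewrite in_setD in_T_r !in_Lm_r eqxx.
rewrite dF_sum raddf_sum /= (bigD1 i0) //= big1 ?addr0; last first.
  move=> i ne; case: ifP => _; last by rewrite mcoeff0.
  rewrite mcoeffX; case: eqP => // /ind_inj /setP /(_ (rshift n i0)).
  by rewrite !in_setD !in_T_r !in_Lm_r eqxx eq_sym (negbTE ne).
have s0 := Lm_sub_T h0.
case: (eqVneq G G0) => [->|ne].
  case: ifP => [_|/negP[]]; [by rewrite mcoeffX !eqxx | exact: s0].
have nG : (inr G == inr G0 :> face_t Fs + face_t Fs) = false.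
  by apply/eqP => -[e]; rewrite e eqxx in ne.
rewrite nG; case: ifP => s; first last.
  by rewrite mcoeff0.
rewrite mcoeffX; case: eqP => // /ind_inj /(setD_inj s s0) /Lm_inj /val_inj e.
by rewrite e eqxx in ne.
Qed.

Lemma extract n m (Fs : 'I_m -> {set 'I_n}) (c : face_t Fs + face_t Fs -> rat) u x0 :
  (forall x, (lemma6_family Fs x)@_u = (x == x0)%:R) ->
  (\sum_x c x *: lemma6_family Fs x)@_u = c x0.
Proof.
move=> hc; rewrite raddf_sum (bigD1 x0) //= mcoeffZ hc eqxx mulr1 big1 ?addr0 //.
by move=> x /negbTE ne; rewrite mcoeffZ hc ne mulr0.
Qed.

Lemma indep n m (Fs : 'I_m -> {set 'I_n}) (c : face_t Fs + face_t Fs -> rat) :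
  \sum_x c x *: lemma6_family Fs x = 0 -> forall x, c x = 0.
Proof.
move=> h [F|G].
  by rewrite -(extract c (coef_fam_l F)) h mcoeff0.
have /andP [_ /existsP [i0 h0]] := valP G.
by rewrite -(extract c (coef_fam_r h0)) h mcoeff0.
Qed.

Lemma in_span1 k (S : {mpoly rat[k]} -> Prop) p : S p -> in_span S p.
Proof.
move=> h; exists 1%N, (fun _ => p), (fun _ => 1); split => //.
by rewrite big_ord1 scale1r.
Qed.

Lemma mem_fam n m d (Fs : 'I_m -> {set 'I_n}) (hd : forall i, #|Fs i| = d) x :
  dplus (fpoly Fs) (lemma6_family Fs x).
Proof.
apply: in_span1.
case: x => [F|G] /=.
  have fF := valP F; have hc := face_card hd fF.
  case/andP: fF => _ /existsP [i hi]; have tg := tdeg_ge hd i.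
  have sT := Lm_sub_T hi.
  exists (ind (Tset Fs i :\: Lm m (val F))).
  rewrite mdeg_ind cardsDS // card_T hd card_Lm; split; first lia.
  split; first lia.
  rewrite mderiv_f (bigD1 i) //= lem_indP subsetDl ind_sub ?subsetDl // setDDK //.
  rewrite xmonE big1 ?addr0 // => i' ne; rewrite lem_indP; case: ifP => //.
  move=> /subsetP /(_ (rshift n i)); rewrite in_setD !in_T_r in_Lm_r eqxx (eq_sym i).
  by rewrite (negbTE ne) => /(_ isT).
have fG := valP G; have hc := face_card hd fG.
case/andP: fG => _ /existsP [i hi]; have tg := tdeg_ge hd i.
exists (ind (Lm m (val G))); rewrite mdeg_ind card_Lm dFE.
split; first lia. split; first lia. by [].
Qed.


Local Close Scope ring_scope.

Theorem lemma6 (n m d : nat) (Fs : 'I_m -> {set 'I_n})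
    (hd : forall i, #|Fs i| = d) :
  is_basis (dplus (fpoly Fs)) (lemma6_family Fs) /\
  has_dim (dplus (fpoly Fs)) (2 * #|[set Y : {set 'I_n} | is_face Fs Y]|).
Proof.
have hb : is_basis (dplus (fpoly Fs)) (lemma6_family Fs).
  split.
  - by move=> x; exact: mem_fam hd x.
  - exact: indep.
  - move=> p [l [g [c [hg ->]]]].
    suff : spanb Fs (\sum_(k < l) (c k *: g k)%R) by [].
    apply: (big_ind (spanb Fs)); [exact: spanb0 | exact: spanbD |].
    move=> k _; apply: spanbZ; have [mm [h1 [h2 ->]]] := hg k.
    exact: deriv_span hd mm h1 h2.
split => //; apply: (dim_of_basis _ hb).
by rewrite card_sum card_sig cardsE mul2n addnn.
Qed.
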